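(* Let $G$ be a finite commutative transitive group with trivial center, and let $G_1,\dots,G_n$ be its maximal abelian subgroups, which cover $G$, with $n\geq3$. Set $$\rho(n)=1+(n-1)\prod_{i=1}^n|G_i|-\sum_{i=1}^n\prod_{j\neq i}|G_j|,\qquad \mathcal N_G=1+(n-1)|G|-\sum_{i=1}^n\frac{|G|}{|G_i|}.$$ Then $\rho(n)>\mathcal N_G$.
   Context: A group $G$ is commutative transitive (CT) if commutation is transitive on non-central elements: for all non-central $a,b,c\in G$, $[a,b]=[b,c]=1$ implies $[a,c]=1$. $\rho(n)$ is the rank of the free kernel of $G_1*\cdots*G_n\to G_1\times\cdots\times G_n$, and $\mathcal N_G$ is the rank of the free group $\pi_1(E(2,G))$ (with $E(2,G)$ the homotopy fibre of $B(2,G)\to BG$, where $B(2,G)$ is the geometric realization of the simplicial subspace of the bar construction of $G$ whose $k$-simplices are the pairwise commuting $k$-tuples $\mathrm{Hom}(\mathbb Z^k,G)\subseteq G^k$). *)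

(* Defs.v *)
From HB Require Import structures.
From mathcomp Require Import all_boot all_order all_algebra all_fingroup all_solvable.
Set Implicit Arguments. Unset Strict Implicit. Unset Printing Implicit Defensive.

Local Open Scope group_scope.

Definition comm_transitive (gT : finGroupType) (G : {set gT}) : Prop :=
  forall a b c : gT,
    a \in G :\: 'Z(G) -> b \in G :\: 'Z(G) -> c \in G :\: 'Z(G) ->
    commute a b -> commute b c -> commute a c.

Definition max_abelian_subgroups (gT : finGroupType) (G : {set gT})
  : {set {group gT}} :=
  [set A : {group gT} | [max A of B | (B \subset G) && abelian B]].

(* Main.v *)
Require Import Defs.
From mathcomp Require Import all_boot all_order all_algebra all_fingroup all_solvable.
From mathcomp Require Import zify.
Import GRing.Theory Num.Theory.

Lemma card_bigcup_leq (gT : finGroupType) (M : {set {group gT}}) (F : {group gT} -> {set gT}) :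
  (#|\bigcup_(A in M) F A| <= \sum_(A in M) #|F A|)%N.
Proof.
elim/big_rec2: _ => [|i U s _ IH]; first by rewrite cards0.
apply: leq_trans (leq_card_setU _ _).1 _; lia.
Qed.

Lemma sum_prod_aux (gT : finGroupType) (M : {set {group gT}}) (P : pred {group gT})
   (f : {group gT} -> nat) :
  (forall A, 0 < f A)%N ->
  (1 + \sum_(A in M | P A) (f A - 1) <= \prod_(A in M | P A) f A)%N.
Proof.
move=> hf.
elim/big_rec2: _ => [//|i s p _ IH].
have := hf i; nia.
Qed.

Theorem lemma7p4 (gT : finGroupType) (G : {group gT}) :
  comm_transitive G ->
  ('Z(G) = 1)%g ->
  (3 <= #|max_abelian_subgroups G|)%N ->
  let M := max_abelian_subgroups G in
  let n := #|M| in
  let rho : int :=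
    (1 + (n%:Z - 1) * (\prod_(A in M) #|A|)%:Z
       - \sum_(A in M) (\prod_(B in M | B != A) #|B|)%:Z)%R in
  let NG : int :=
    (1 + (n%:Z - 1) * #|G|%:Z - \sum_(A in M) (#|G| %/ #|A|)%:Z)%R in
  (NG < rho)%R.
Proof.
move=> _ _ h3; cbv zeta.
set M := max_abelian_subgroups G in h3 *; set n := #|M| in h3 *.
have inM A : A \in M -> [/\ A \subset G, abelian A &
    forall B : {group gT}, B \subset G -> abelian B -> A \subset B -> B = A].
  rewrite inE => /maxgroupP [/andP [sAG abA] mx]; split => // B sBG abB.
  move=> sAB; apply: val_inj; by apply: mx => //; rewrite sBG abB.
have other A : A \in M -> exists2 B, B \in M & B != A.
  move=> AM; have : (0 < #|M :\ A|)%N by move: h3; rewrite /n (cardsD1 A M) AM; lia.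
  by case/card_gt0P => B; rewrite in_setD1 => /andP [] ? ?; exists B.
have ge2 A : A \in M -> (2 <= #|A|)%N.
  move=> AM; rewrite ltnNge; apply/negP => le1.
  have A1 : A :=: 1%g by apply: card_le1_trivg.
  case: (other A AM) => B BM nBA.
  case: (inM A AM) => _ _ mx; case: (inM B BM) => sBG abB _.
  by move: nBA; rewrite (mx B sBG abB) ?eqxx // A1 sub1G.
have cov : G \subset [set 1%g] :|: \bigcup_(A in M) (A :\ 1%g).
  apply/subsetP => x xG; rewrite in_setU in_set1.
  case: eqP => [//|/eqP nx1] /=.
  have gPx : (fun B : {group gT} => (B \subset G) && abelian B) <[x]>%G.
    by rewrite /= cycle_subG xG cycle_abelian.
  case: (@maxgroup_exists gT (fun B : {group gT} => (B \subset G) && abelian B) <[x]>%G gPx) => H mH sxH.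
  apply/bigcupP; exists H; first by rewrite inE.
  by rewrite in_setD1 nx1 (subsetP sxH) // cycle_id.
have hg : (#|G| <= 1 + \sum_(A in M) (#|A| - 1))%N.
  move/leq_trans: (subset_leq_card cov); apply.
  apply: leq_trans (leq_card_setU _ _).1 _; rewrite cards1 leq_add2l.
  apply: leq_trans (@card_bigcup_leq gT M (fun A => (A :\ 1)%g)) _.
  apply: leq_sum => A _; by rewrite (cardsD1 1%g A) group1 /= addKn.
have [A0 A0M] : exists A0, A0 \in M.
  by apply/card_gt0P; rewrite -/n; lia.
case: (other A0 A0M) => B0 B0M nB0.
have hP : (#|G| < \prod_(A in M) #|A|)%N.
  set Q := \prod_(B in M | B != A0) #|B|.
  set S := \sum_(B in M | B != A0) (#|B| - 1).
  have e1 : \prod_(A in M) #|A| = #|A0| * Q by rewrite (bigD1 A0 A0M).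
  have e2 : \sum_(A in M) (#|A| - 1) = (#|A0| - 1) + S by rewrite (bigD1 A0 A0M).
  have hQS : (1 + S <= Q)%N := @sum_prod_aux gT M (fun B => B != A0) (fun A : {group gT} => #|A|) (fun A => cardG_gt0 A).
  have hQ : (2 <= Q)%N.
    rewrite /Q (bigD1 B0) /=; last by rewrite B0M nB0.
    apply: leq_trans (ge2 B0 B0M) _; rewrite leq_pmulr // prodn_gt0 // => i.
  have := ge2 A0 A0M.
  move: hg; rewrite e1 e2.
  nia.
set P := \prod_(A in M) #|A| in hP *.
have key A : A \in M -> (2 * ((\prod_(B in M | B != A) #|B|)%:Z - (#|G| %/ #|A|)%:Z) <= P%:Z - #|G|%:Z)%R.
  move=> AM.
  have e1 : P = #|A| * \prod_(B in M | B != A) #|B| by rewrite /P (bigD1 A AM).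
  have e2 : #|G| = #|A| * (#|G| %/ #|A|).
    by rewrite mulnC divnK // cardSg //; case: (inM A AM).
  have := ge2 A AM.
  move: hP e1 e2.
  set q := \prod_(B in M | B != A) #|B|; set r := #|G| %/ #|A|.
  nia.
have H1 : (\sum_(A in M) (2 * ((\prod_(B in M | B != A) #|B|)%:Z - (#|G| %/ #|A|)%:Z))
   <= \sum_(A in M) (P%:Z - #|G|%:Z))%R by apply: ler_sum.
rewrite sumr_const -mulr_sumr sumrB in H1.
move: H1 h3 hP.
set Sq := (\sum_(A in M) _)%R; set Sr := (\sum_(A in M) (#|G| %/ #|A|)%:Z)%R.
rewrite -/n.
rewrite -mulr_natr.
nia.
Qed.
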